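(* For any consistent $\mathrm{k}$-step IEMS method with real coefficients $a_j$ ($0\le j\le\mathrm{k}-1$), $b_j$ ($0\le j\le\mathrm{k}$), $c_j$ ($0\le j\le\mathrm{k}-1$), the implicit-explicit controllability intensity satisfies $$\mathfrak{I}_{\mathrm{IE}}:=\frac{\min_{\theta\in[0,2\pi)}\Re\big[b(\theta)/a(\theta)\big]}{\max_{\theta\in[0,2\pi)}\big|c(\theta)/a(\theta)\big|}\le1,$$ and the value $1$ is achieved by the implicit-explicit Euler scheme ($\mathrm{k}=1$, $a_0=1$, $b_0=1$, $b_1=0$, $c_0=1$).
   Context: $a(\theta)=\sum_ja_je^{\imath j\theta}$, $b(\theta)=\sum_jb_je^{\imath j\theta}$, $c(\theta)=\sum_jc_je^{\imath j\theta}$ with $\imath=\sqrt{-1}$. The method is $\sum_{j=0}^{\mathrm{k}-1}a_j\partial_\tau u^{n-j}+\varpi\sum_{j=0}^{\mathrm{k}}b_j\mathcal{L}u^{n-j}=\sum_{j=0}^{\mathrm{k}-1}c_j\mathcal{F}(u^{n-j-1})$; consistency means $\sum_{j=0}^{\mathrm{k}-1}a_j=\sum_{j=0}^{\mathrm{k}}b_j=\sum_{j=0}^{\mathrm{k}-1}c_j=1$. The maximum and minimum are assumed to be finite, with the denominator positive. *)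

(* Defs.v *)
From HB Require Import structures.
From mathcomp Require Import all_boot all_order all_algebra.
From mathcomp Require Import complex.
From mathcomp Require Import all_classical all_reals all_analysis.
Set Implicit Arguments. Unset Strict Implicit. Unset Printing Implicit Defensive.
Import Order.TTheory GRing.Theory Num.Theory.
Local Open Scope ring_scope.
Local Open Scope complex_scope.

Definition expi (R : realType) (t : R) : R[i] := cos t +i* sin t.

Definition symb (R : realType) (n : nat) (p : 'I_n -> R) (theta : R) : R[i] :=
  \sum_(j < n) (p j)%:C * expi (j%:R * theta).

Definition is_min_on_circle (R : realType) (f : R -> R) (m : R) : Prop :=
  (exists2 t, 0 <= t < 2 * pi & f t = m) /\
  (forall t, 0 <= t < 2 * pi -> m <= f t).

Definition is_max_on_circle (R : realType) (f : R -> R) (M : R) : Prop :=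
  (exists2 t, 0 <= t < 2 * pi & f t = M) /\
  (forall t, 0 <= t < 2 * pi -> f t <= M).

Definition ReBA (R : realType) k (a : 'I_k -> R) (b : 'I_k.+1 -> R) (t : R) : R :=
  complex.Re (symb b t / symb a t).
Definition absCA (R : realType) k (a c : 'I_k -> R) (t : R) : R :=
  ComplexField.Normc.normc (symb c t / symb a t).

(* Main.v *)
Require Import Defs.
From HB Require Import structures.
From mathcomp Require Import all_boot all_order all_algebra.
From mathcomp Require Import complex.
From mathcomp Require Import all_classical all_reals all_analysis.
Import Order.TTheory GRing.Theory Num.Theory.
Local Open Scope ring_scope.
Lemma zero_in (R : realType) : (0:R) <= 0 < 2 * (@pi R).
Proof. by rewrite lexx /= mulr_gt0 ?pi_gt0. Qed.

Local Open Scope complex_scope.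

Lemma expi0 (R : realType) : expi (0:R) = 1.
Proof. by rewrite /expi cos0 sin0. Qed.
Lemma symb0 (R : realType) n (p : 'I_n -> R) : \sum_(j<n) p j = 1 -> symb p 0 = 1.
Proof.
move=> h; rewrite /symb.
under eq_bigr => j _ do rewrite mulr0 expi0 mulr1.
by rewrite -(rmorph_sum (@real_complex R)) h.
Qed.
Lemma re1 (R : realType) : complex.Re (1 : R[i]) = 1.
Proof. by []. Qed.
Lemma nc1 (R : realType) : ComplexField.Normc.normc (1 : R[i]) = 1.
Proof. by rewrite /ComplexField.Normc.normc /= expr0n /= addr0 expr1n sqrtr1. Qed.

Local Close Scope complex_scope.

Theorem corollary3p4 :
  (forall (R : realType) (k : nat) (a : 'I_k -> R) (b : 'I_k.+1 -> R)
          (c : 'I_k -> R) (m M : R),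
      (0 < k)%N ->
      \sum_(j < k) a j = 1 -> \sum_(j < k.+1) b j = 1 -> \sum_(j < k) c j = 1 ->
      (forall t, 0 <= t < 2 * pi -> symb a t != 0) ->
      is_min_on_circle (ReBA a b) m ->
      is_max_on_circle (absCA a c) M ->
      0 < M ->
      m / M <= 1)
  /\
  (forall (R : realType),
      let a : 'I_1 -> R := fun _ => 1 in
      let b : 'I_2 -> R := fun j => if val j == 0%N then 1 else 0 in
      let c : 'I_1 -> R := fun _ => 1 in
      exists m M : R,
        [/\ is_min_on_circle (ReBA a b) m,
            is_max_on_circle (absCA a c) M,
            0 < M & m / M = 1]).
Proof.
split.
  move=> R k a b c m M _ ha hb hc _ [_ hm] [_ hM] M0.
  have m1 : m <= 1.
    by have := hm 0 (zero_in R); rewrite /ReBA symb0 // symb0 // divr1 re1.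
  have M1 : 1 <= M.
    by have := hM 0 (zero_in R); rewrite /absCA symb0 // symb0 // divr1 nc1.
  by rewrite ler_pdivrMr // mul1r (le_trans m1 M1).
move=> R a b c.
have Ha t : symb a t = 1.
  by rewrite /symb big_ord1 /= mul0r expi0 mulr1.
have Hb t : symb b t = 1.
  by rewrite /symb big_ord_recr big_ord1 /= mul0r expi0 mulr1 mul0r addr0.
have Hc t : symb c t = 1.
  by rewrite /symb big_ord1 /= mul0r expi0 mulr1.
exists 1, 1; split; last by rewrite divr1.
- split; first by exists 0; [exact: zero_in|rewrite /ReBA Ha Hb divr1 re1].
  by move=> t _; rewrite /ReBA Ha Hb divr1 re1.
- split; first by exists 0; [exact: zero_in|rewrite /absCA Ha ?Hc divr1 nc1].
  by move=> t _; rewrite /absCA Ha ?Hc divr1 nc1.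
- exact: ltr01.
Qed.
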